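(* Let $\Psi$ be a finite set of contexts, $\psi_t$ a target context, and $D$ a distribution such that $D(x\mid\psi)>0$ for all $\psi\in\Psi$ and $x\models\psi$, and such that $\Psi$ is representative for $\psi_t$ with respect to every $h\in\mathcal{H}$. Then for every $\epsilon,\delta\in(0,1)$ there exist integers $t_\psi(\epsilon,\delta)$, $\psi\in\Psi$, such that if the training set $S$ contains, for every $\psi\in\Psi$, at least $t_\psi(\epsilon,\delta)$ examples with context $\psi$ (drawn i.i.d. from $D(x,y\mid\psi)$), then any $h\in\mathcal{H}$ minimizing $\sum_{\psi\in\Psi}L_{S,\psi}(h)$ satisfies $$\Pr\Big(L_{D,\psi_t}(h)>\min_{h'\in\mathcal{H}}\sum_{\psi\in\Psi}L_{S,\psi}(h')+\epsilon\Big)<\delta.$$ In particular, in the realizable setting (where some $h'\in\mathcal{H}$ has $\sum_{\psi}L_{S,\psi}(h')=0$) this gives $\Pr(L_{D,\psi_t}(h)>\epsilon)<\delta$.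
   Context: Let $X_1,\dots,X_n$ be Boolean variables and $\Phi=\{\phi_1,\dots,\phi_m\}$ candidate formulas; $\phi(c)=\bigwedge_{j:c_j=1}\phi_j$ for $c\in\{0,1\}^m$, $f_w(x)=\sum_jw_j\mathbb{1}[x\models\phi_j]$ for $w\in[-1,1]^m$. A context is a Boolean formula. The MAX-SAT classifier $h_{c,w}(x,\psi)=1$ iff $x\models\phi(c)\wedge\psi$ and $f_w(x)\ge f_w(x')$ for all $x'\models\phi(c)\wedge\psi$, else $0$; $\mathcal{H}$ is the set of these. A ground-truth $h^*\in\mathcal{H}$ labels examples, $y=h^*(x,\psi)$. $D(x\mid\psi)$ is a distribution over assignments satisfying $\psi$; $L_{D,\psi}(h)=\sum_x\mathbb{1}[h(x,\psi)\neq h^*(x,\psi)]D(x\mid\psi)$. For the training set $S$ of triples $(\psi_k,x_k,y_k)$, and $S_\psi$ the examples in $S$ with context $\psi$, $L_{S,\psi}(h)=\frac{1}{|S_\psi|}\sum_{(\psi,x,y)\in S_\psi}\mathbb{1}[h(x,\psi)\neq y]$. Representativeness: for $h\in\mathcal{H}$, let $\chi(\psi,x,\psi')$ hold iff $x\models\psi\wedge\psi'$ and ($h(x,\psi)\neq h^*(x,\psi)\Rightarrow h(x,\psi')\neq h^*(x,\psi')$); $\#(\psi,x)=|\{\psi'\in\Psi:\chi(\psi,x,\psi')\}|$; $\Psi$ is representative for $\psi_t$ w.r.t. $h$ iff $\#(\psi_t,x)>0$ for all assignments $x$. *)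

(* Defs.v *)
From HB Require Import structures.
From mathcomp Require Import all_boot all_order all_algebra.
From mathcomp Require Import reals.
Set Implicit Arguments. Unset Strict Implicit. Unset Printing Implicit Defensive.
Import Order.TTheory GRing.Theory Num.Theory.
Local Open Scope ring_scope.

Definition assign (n : nat) := {ffun 'I_n -> bool}.

(* A Boolean formula over X_1..X_n, represented semantically by its set of
   models; [x \in phi] means x |= phi. *)
Definition formula (n : nat) := {set assign n}.

Section MaxSat.
Variables (R : realType) (n m : nat) (Phi : 'I_m -> formula n).

Definition phi_c (c : {ffun 'I_m -> bool}) : formula n :=
  \bigcap_(j | c j) Phi j.

Definition f_w (w : 'I_m -> R) (x : assign n) : R :=
  \sum_(j < m) w j * (x \in Phi j)%:R.

Definition h_cw (c : {ffun 'I_m -> bool}) (w : 'I_m -> R)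
    (x : assign n) (psi : formula n) : bool :=
  (x \in phi_c c :&: psi) &&
  [forall x' : assign n, (x' \in phi_c c :&: psi) ==> (f_w w x' <= f_w w x)].

Definition valid_w (w : 'I_m -> R) : Prop := forall j, -1 <= w j <= 1.

Definition in_H (h : assign n -> formula n -> bool) : Prop :=
  exists (c : {ffun 'I_m -> bool}) (w : 'I_m -> R),
    valid_w w /\ forall x psi, h x psi = h_cw c w x psi.

Variable hstar : assign n -> formula n -> bool.

Definition chi (h : assign n -> formula n -> bool)
    (psi : formula n) (x : assign n) (psi' : formula n) : bool :=
  [&& x \in psi, x \in psi' &
      (h x psi != hstar x psi) ==> (h x psi' != hstar x psi')].

Definition num_chi (Psi : {set formula n}) (h : assign n -> formula n -> bool)
    (psi : formula n) (x : assign n) : nat :=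
  #|[set psi' in Psi | chi h psi x psi']|.

Definition representative (Psi : {set formula n}) (psi_t : formula n)
    (h : assign n -> formula n -> bool) : Prop :=
  forall x : assign n, x \in psi_t -> (0 < num_chi Psi h psi_t x)%N.

(* D : context -> conditional distribution D(. | psi) over assignments *)
Definition is_cond_distr (D : formula n -> assign n -> R) (psi : formula n)
    : Prop :=
  (forall x, 0 <= D psi x) /\ (forall x, x \notin psi -> D psi x = 0) /\
  \sum_(x : assign n) D psi x = 1.

Definition L_D (D : formula n -> assign n -> R) (psi : formula n)
    (h : assign n -> formula n -> bool) : R :=
  \sum_(x : assign n) (h x psi != hstar x psi)%:R * D psi x.

Definition ctx (Psi : {set formula n}) := {psi : formula n | psi \in Psi}.

(* A training set: for each psi in Psi, a tuple of k psi assignments with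
   context psi (labels are y = hstar x psi). *)
Definition sample (Psi : {set formula n}) (k : ctx Psi -> nat) :=
  {dffun forall i : ctx Psi, (k i).-tuple (assign n)}.

Definition L_S (Psi : {set formula n}) (k : ctx Psi -> nat) (S : sample k)
    (i : ctx Psi) (h : assign n -> formula n -> bool) : R :=
  (k i)%:R^-1 *
  \sum_(x <- S i) (h x (val i) != hstar x (val i))%:R.

Definition obj (Psi : {set formula n}) (k : ctx Psi -> nat) (S : sample k)
    (h : assign n -> formula n -> bool) : R :=
  \sum_(i : ctx Psi) L_S S i h.

(* Probability of an event on training sets, the examples with context psi
   being drawn i.i.d. from D(. | psi), independently across contexts. *)
Definition Pr_sample (D : formula n -> assign n -> R) (Psi : {set formula n})
    (k : ctx Psi -> nat) (E : sample k -> bool) : R :=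
  \sum_(S : sample k)
    (E S)%:R * \prod_(i : ctx Psi) \prod_(x <- S i) D (val i) x.

End MaxSat.

(* Main.v *)
Require Import Defs.
From HB Require Import structures.
From mathcomp Require Import all_boot all_order all_algebra.
From mathcomp Require Import ring lra.
From mathcomp Require Import reals.
Import Order.TTheory GRing.Theory Num.Theory.
Local Open Scope ring_scope.
Lemma sum_dffun (R : comNzRingType) (I : finType) (T_ : I -> finType)
  (F : forall i, T_ i -> R) :
  \sum_(S : {dffun forall i, T_ i}) \prod_i F i (S i) = \prod_i \sum_(s : T_ i) F i s.
Proof.
under [RHS]eq_bigr => i _ do rewrite (big_tag (fun i (s : T_ i) => F i s) i).
rewrite bigA_distr_big_dep.
pose P_ := fun i => [ffun s : T_ i => F i s].
transitivity (\sum_(t : fprod T_) \prod_(i in I) P_ i (t i)).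
  rewrite (reindex (@fprod_of_dffun _ T_)); last first.
    by apply: onW_bij; apply: fprod_of_dffun_bij.
  apply: eq_bigr => S _; apply: eq_bigr => i _.
  by rewrite /P_ ffunE fprodE.
rewrite (@big_fprod R 0 1 *%R +%R).
apply: eq_bigr => g _; apply: eq_bigr => i _.
by rewrite /P_; case: (g i) => j s /=; rewrite /untag; case: eqP => // e; rewrite ffunE.
Qed.
Lemma sum_tuple (R : comNzRingType) (T : finType) (k : nat) (f : T -> R) :
  \sum_(s : k.-tuple T) \prod_(y <- s) f y = (\sum_y f y) ^+ k.
Proof.
rewrite -[in RHS](card_ord k) -prodr_const bigA_distr_bigA.
rewrite (reindex (fun g : {ffun 'I_k -> T} => [tuple g i | i < k])); last first.
  exists (fun s : k.-tuple T => [ffun i => tnth s i]) => g _.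
    by apply/ffunP => i; rewrite ffunE tnth_mktuple.
  by apply: eq_from_tnth => i; rewrite tnth_mktuple ffunE.
apply: eq_bigr => g _; rewrite big_tuple; apply: eq_bigr => i _.
by rewrite tnth_mktuple.
Qed.

Lemma prod_notin (R : comNzRingType) (T : eqType) (x : T) (f : T -> R) (s : seq T) :
  \prod_(y <- s) ((y != x)%:R * f y) = (x \notin s)%:R * \prod_(y <- s) f y.
Proof.
elim: s => [|y s IH]; first by rewrite !big_nil mul1r.
rewrite !big_cons IH in_cons negb_or eq_sym.
by case: (x == y); case: (x \in s); rewrite /= ?mul0r ?mul1r ?mulr0 ?mul0r.
Qed.

Lemma pow_bern (R : realFieldType) (q : R) (t : nat) : 0 <= q <= 1 ->
  q ^+ t * (1 + t%:R * (1 - q)) <= 1.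
Proof.
move=> /andP[q0 q1]; elim: t => [|t IH]; first by rewrite expr0 mul0r addr0 mul1r.
have ht : 0 <= t%:R :> R by [].
have hq : 0 <= q ^+ t by rewrite exprn_ge0.
rewrite exprS -natr1.
have : q * q ^+ t * (1 + (t%:R + 1) * (1 - q)) =
   q ^+ t * (1 + t%:R * (1 - q)) - q^+t * (t%:R + 1) * (1-q)^+2 by rewrite expr2; ring.
move=> ->.
have : 0 <= q ^+ t * (t%:R + 1) * (1 - q) ^+ 2.
  by apply: mulr_ge0; [apply: mulr_ge0 => //; apply: addr_ge0 | apply: sqr_ge0].
lra.
Qed.

Lemma pow_small (R : realType) (q r : R) : 0 <= q < 1 -> 0 < r ->
  exists t : nat, forall k, (t <= k)%N -> q ^+ k < r.
Proof.
move=> /andP[q0 q1] r0.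
have b0 : 0 < 1 - q by lra.
exists (Num.bound ((r * (1 - q))^-1)) => k tk.
have hi : 0 <= (r * (1 - q))^-1 by rewrite invr_ge0 ltW // mulr_gt0.
have hb := @archi_boundP R _ hi.
have hk : (Num.bound ((r * (1 - q))^-1))%:R <= k%:R :> R by rewrite ler_nat.
have hk2 : (r * (1 - q))^-1 < k%:R by apply: lt_le_trans hk.
have hk3 : 1 < k%:R * (r * (1 - q)).
  by rewrite -ltr_pdivrMr ?mulr_gt0 // div1r.
have hp := @pow_bern R q k (ltac:(apply/andP; split; lra)).
have hq : 0 <= q ^+ k by rewrite exprn_ge0.
have hk0 : 0 <= k%:R :> R by [].
nra.
Qed.

Lemma seq_sum_term (R : numDomainType) (T : eqType) (s : seq T) (F : T -> R) y :
  (forall z, 0 <= F z) -> y \in s -> F y <= \sum_(z <- s) F z.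
Proof.
move=> F0 ys; rewrite (perm_big _ (perm_to_rem ys)) big_cons.
by rewrite lerDl sumr_ge0.
Qed.

Lemma D_le1 (R : realType) n (D : formula n -> assign n -> R) psi x :
  is_cond_distr D psi -> D psi x <= 1.
Proof.
move=> [D0 [_ D1]]; rewrite -D1 (bigD1 x) //= lerDl.
by apply: sumr_ge0 => y _.
Qed.

Lemma prob_miss (R : realType) n (Psi : {set formula n}) (k : ctx Psi -> nat)
  (D : formula n -> assign n -> R) (i : ctx Psi) (x : assign n) :
  (forall psi, psi \in Psi -> is_cond_distr D psi) ->
  \sum_(S : sample k) (x \notin S i)%:R * \prod_j \prod_(y <- S j) D (val j) y
   = (1 - D (val i) x) ^+ (k i).
Proof.
move=> HD.
pose G := fun j (s : (k j).-tuple (assign n)) =>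
  if j == i then \prod_(y <- s) ((y != x)%:R * D (val j) y)
  else \prod_(y <- s) D (val j) y.
transitivity (\sum_(S : sample k) \prod_j G j (S j)).
  apply: eq_bigr => S _.
  rewrite (bigD1 i) //= [in RHS](bigD1 i) //= /G eqxx prod_notin.
  rewrite mulrA; congr (_ * _); apply: eq_bigr => j /negbTE ->; done.
rewrite (@sum_dffun R _ _ G) (bigD1 i) //= [X in _ * X]big1 ?mulr1.
  rewrite /G eqxx sum_tuple; congr (_ ^+ _).
  have [_ [_ D1]] := HD _ (valP i).
  rewrite -[X in _ = X - _]D1 (bigD1 x) //= eqxx mul0r add0r [X in _ = X - _](bigD1 x) //=.
  rewrite [D _ x + _]addrC addrK; apply: eq_bigr => y yx; by rewrite yx /= mul1r.
move=> j /negbTE ji; rewrite /G ji sum_tuple.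
by have [_ [_ ->]] := HD _ (valP j); rewrite expr1n.
Qed.

Lemma union_bound (R : realType) n (Psi : {set formula n}) (k : ctx Psi -> nat)
  (D : formula n -> assign n -> R) (E : sample k -> bool) :
  (forall psi, psi \in Psi -> is_cond_distr D psi) ->
  (forall S, E S -> exists (i : ctx Psi) (x : assign n), (x \in val i) && (x \notin S i)) ->
  Pr_sample D E <= \sum_(a : ctx Psi * assign n)
     (a.2 \in val a.1)%:R * (1 - D (val a.1) a.2) ^+ (k a.1).
Proof.
move=> HD HE.
have W0 : forall S : sample k, 0 <= \prod_j \prod_(y <- S j) D (val j) y.
  move=> S; apply: prodr_ge0 => j _; apply: prodr_ge0 => y _.
  by have [D0 _] := HD _ (valP j).
apply: (@le_trans _ _ (\sum_(S : sample k) (\sum_(a : ctx Psi * assign n)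
      ((a.2 \in val a.1) && (a.2 \notin S a.1))%:R) *
      \prod_j \prod_(y <- S j) D (val j) y)).
  apply: ler_sum => S _; apply: ler_wpM2r => //.
  case ES: (E S); last by apply: sumr_ge0.
  have [i [x Hix]] := HE S ES.
  rewrite (bigD1 (i, x)) //= Hix lerDl.
  by apply: sumr_ge0.
under eq_bigr do rewrite mulr_suml.
rewrite exchange_big /=; apply: ler_sum => [[i x]] _ /=.
rewrite -prob_miss // mulr_sumr; apply: ler_sum => S _.
by case: (x \in val i); rewrite /= ?mul1r ?mul0r.
Qed.

Theorem theorem4 (R : realType) (n m : nat) (Phi : 'I_m -> formula n)
    (hstar : assign n -> formula n -> bool)
    (Psi : {set formula n}) (psi_t : formula n)
    (D : formula n -> assign n -> R) :
  in_H R Phi hstar ->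
  (forall psi, psi \in Psi -> is_cond_distr D psi) ->
  is_cond_distr D psi_t ->
  (forall psi x, psi \in Psi -> x \in psi -> 0 < D psi x) ->
  (forall h, in_H R Phi h -> representative hstar Psi psi_t h) ->
  forall eps delta : R, 0 < eps < 1 -> 0 < delta < 1 ->
  exists t : ctx Psi -> nat,
  forall k : ctx Psi -> nat, (forall i, (t i <= k i)%N) ->
  forall erm : sample k -> (assign n -> formula n -> bool),
    (forall S, in_H R Phi (erm S)) ->
    (forall S h', in_H R Phi h' -> obj R hstar S (erm S) <= obj R hstar S h') ->
    Pr_sample D (fun S => obj R hstar S (erm S) + eps < L_D hstar D psi_t (erm S))
      < delta
    /\
    Pr_sample D (fun S => eps < L_D hstar D psi_t (erm S)) < delta.
Proof.
move=> Hhs HD Ht Hpos Hrep eps delta /andP[eps0 _] /andP[del0 _].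
pose N := #|{: ctx Psi * assign n}|.
pose r := delta / (N.+1)%:R.
have r0 : 0 < r by rewrite divr_gt0.
have Nr : N%:R * r < delta.
  rewrite /r mulrA ltr_pdivrMr ?ltr0n // mulrC ltr_pM2l // ltr_nat //.
have : forall a : ctx Psi * assign n, exists t : nat, forall kk, (t <= kk)%N ->
    a.2 \in val a.1 -> (1 - D (val a.1) a.2) ^+ kk < r.
  move=> [i x] /=; case xi: (x \in val i); last by exists 0%N.
  have hp := Hpos _ _ (valP i) xi.
  have h1 := @D_le1 _ _ D (val i) x (HD _ (valP i)).
  have [t Ht'] := @pow_small R (1 - D (val i) x) r (ltac:(apply/andP; split; lra)) r0.
  by exists t => kk tk _; apply: Ht'.
move=> /fin_all_exists [f Hf].
exists (fun _ => (\max_a f a)%N) => k Hk erm HermH Hermmin.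
have key : forall E : sample k -> bool,
    (forall S, E S -> exists (i : ctx Psi) (x : assign n), (x \in val i) && (x \notin S i)) ->
    Pr_sample D E < delta.
  move=> E HE; apply: le_lt_trans (@union_bound _ _ _ _ _ _ HD HE) _.
  apply: le_lt_trans Nr; rewrite mulr_natl -sumr_const.
  apply: ler_sum => [[i x]] _ /=.
  case xi: (x \in val i) => /=; last by rewrite mul0r ltW.
  rewrite mul1r; apply: ltW.
  apply: (Hf (i, x)) => //=; apply: leq_trans (Hk i).
  by rewrite (bigD1 (i, x)) //= leq_maxl.
have Lnn : forall (S : sample k) (h : assign n -> formula n -> bool) (i : ctx Psi), 0 <= @L_S R n hstar Psi k S i h.
  move=> S h i; rewrite /L_S; apply: mulr_ge0; first by rewrite invr_ge0.
  by apply: sumr_ge0.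
have det : forall S : sample k, (forall (i : ctx Psi) (x : assign n), x \in val i -> x \in S i) ->
    0 <= obj R hstar S (erm S) /\ L_D hstar D psi_t (erm S) = 0.
  move=> S cov.
  have o0 : 0 <= obj R hstar S (erm S) by apply: sumr_ge0.
  split=> //.
  have oh : obj R hstar S hstar = 0.
    apply: big1 => i _; rewrite /L_S big1 ?mulr0 // => y _; by rewrite eqxx.
  have oe : obj R hstar S (erm S) = 0.
    by apply/eqP; rewrite eq_le o0 andbT -oh; apply: Hermmin.
  have noerr : forall (i : ctx Psi) (x : assign n), x \in val i -> erm S x (val i) = hstar x (val i).
    move=> i x xi.
    have Li := psumr_eq0P (fun i _ => Lnn S (erm S) i) oe (i := i) isT.
    move: Li; rewrite /L_S => /eqP; rewrite mulf_eq0 => /orP[].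
      rewrite invr_eq0 pnatr_eq0 => /eqP k0.
      have H : x \in tval (S i) := cov i x xi.
      have : (0 < size (tval (S i)))%N by move: H; case: (tval (S i)).
      by rewrite size_tuple k0.
    move=> /eqP Ls.
    have := @seq_sum_term R _ (S i)
       (fun z => (erm S z (val i) != hstar z (val i))%:R) x (fun z => ler0n _ _)
       (cov i x xi).
    rewrite Ls /=; case: eqP => //= _; by rewrite ler10.
  apply: big1 => x _.
  case xt: (x \in psi_t); last first.
    by have [_ [Hz _]] := Ht; rewrite Hz ?mulr0 // xt.
  have := Hrep _ (HermH S) x xt; rewrite /num_chi card_gt0 => /set0Pn [psi'].
  rewrite inE => /andP[Hpsi' /and3P[_ xp' imp]].
  have e' : erm S x psi' = hstar x psi' := noerr (exist _ psi' Hpsi') x xp'.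
  move: imp; rewrite e' eqxx implybF negbK => /eqP ->; by rewrite eqxx mul0r.

have cover : forall S : sample k, (forall (i : ctx Psi) (x : assign n), x \in val i -> x \in S i) \/
    exists (i : ctx Psi) (x : assign n), (x \in val i) && (x \notin S i).
  move=> S.
  case: (boolP [exists i : ctx Psi, exists x : assign n, (x \in val i) && (x \notin S i)]).
    by move=> /existsP [i /existsP [x H]]; right; exists i, x.
  move=> /existsPn H; left => i x xi; move: (H i) => /existsPn /(_ x).
  by rewrite xi /= negbK.
split; apply: key => S ES; (case: (cover S) => [c|//]); have [o0 L0] := det S c;
  move: ES; rewrite L0; lra.
Qed.
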